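(* Let $G=(V,E)$ be a graph, let $\overline{E}$ be the set of all unordered pairs of independent edges of $G$, let $k=|\overline{E}|$, and fix an ordering $\sigma(0),\dots,\sigma(k-1)$ of $\overline{E}$. Let $0\le i_\nu\le k$ and let $y_\nu\in\{0,1\}^{i_\nu}$ be a partial candidate solution. Suppose there is an array $y_\mu\in\{0,1\}^{k}$ that extends $y_\nu$ (i.e., $y_\mu[j]=y_\nu[j]$ for all $j<i_\nu$; possibly $y_\mu=y_\nu$ when $i_\nu=k$) and that is a TRUE solution of $G$. Then the graph $G_\nu^*$ is planar.
   Context: An edge $e$ is crossed in $y_\nu$ if $e\in\sigma(j)$ for some $j<i_\nu$ with $y_\nu[j]=1$. An edge $e$ is saturated in $y_\nu$ if at least one of the following holds: (a) $e$ is crossed in $y_\nu$; (b) every index $j$ such that $e\in\sigma(j)$ satisfies $j<i_\nu$; (c) for every pair $\{e,f\}\in\overline{E}$ containing $e$, the other edge $f$ is crossed in $y_\nu$. $G_\nu$ is the subgraph of $G$ formed by the saturated edges (with their end-vertices). $G_\nu^*$ is obtained from $G_\nu$ by, for each $j<i_\nu$ with $y_\nu[j]=1$ and $\sigma(j)=\{(u_1,v_1),(u_2,v_2)\}$, removing these two edges and adding a new dummy vertex adjacent to $u_1,v_1,u_2,v_2$ (this is well defined when every edge lies in at most one such pair, which is the case under the hypothesis of the claim). A binary array $y$ of length $k$ is a TRUE solution of $G$ if (1) every edge of $G$ belongs to at most one pair $\sigma(i)$ with $y[i]=1$, and (2) the graph obtained from $G$ by replacing, for each $i$ with $y[i]=1$,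 the two edges of $\sigma(i)$ by a new dummy vertex adjacent to their four end-vertices, is planar. *)

(* Defs.v *)
From Stdlib Require Import Reals.
From mathcomp Require Import all_boot.
Set Implicit Arguments. Unset Strict Implicit. Unset Printing Implicit Defensive.

Definition in01 (t : R) : Prop := Rle R0 t /\ Rle t R1.
Definition open01 (t : R) : Prop := Rlt R0 t /\ Rlt t R1.

Definition simple_arc (g : R -> R * R) : Prop :=
  (forall t, in01 t -> forall eps, Rlt R0 eps -> exists d, Rlt R0 d /\
     forall s, in01 s -> Rlt (Rabs (Rminus s t)) d ->
       Rlt (Rabs (Rminus (fst (g s)) (fst (g t)))) eps /\ Rlt (Rabs (Rminus (snd (g s)) (snd (g t)))) eps)
  /\ (forall s t, in01 s -> in01 t -> g s = g t -> s = t).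

Definition planar (W : finType) (VS : {set W}) (ES : {set {set W}}) : Prop :=
  exists (pos : W -> R * R) (g : {set W} -> R -> R * R),
    {in VS &, injective pos} /\
    (forall e, e \in ES -> simple_arc (g e) /\
       exists u v, [/\ u \in VS, v \in VS, e = [set u; v],
                       g e R0 = pos u & g e R1 = pos v]) /\
    (forall e w t, e \in ES -> w \in VS -> open01 t -> g e t <> pos w) /\
    (forall e f s t, e \in ES -> f \in ES -> e <> f -> open01 s -> open01 t ->
       g e s <> g f t).

Definition indep_pairs (V : finType) (E : {set {set V}}) : {set {set {set V}}} :=
  [set p | [exists e in E, exists f in E, [disjoint e & f] && (p == [set e; f])]].

Section Cross.
Variables (V : finType) (k : nat) (sigma : 'I_k -> {set {set V}}).

(* Starting from the graph (VB, B), for every selected index j remove the two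
   edges of sigma j and add a dummy vertex (inr j) adjacent to their four
   end-vertices. *)
Definition cg_vertices (VB : {set V}) (sel : 'I_k -> bool) : {set (V + 'I_k)} :=
  [set @inl V 'I_k v | v in VB] :|: [set @inr V 'I_k j | j in [set j | sel j]].

Definition cg_edges (B : {set {set V}}) (sel : 'I_k -> bool) : {set {set (V + 'I_k)}} :=
  [set [set @inl V 'I_k v | v in e] | e : {set V} in
       [set e in B | ~~ [exists j, sel j && (e \in sigma j)]]]
  :|: \bigcup_(j | sel j) [set [set @inr V 'I_k j; @inl V 'I_k u] | u in cover (sigma j)].

Definition true_solution (E : {set {set V}}) (y : 'I_k -> bool) : Prop :=
  (forall e, e \in E -> #|[set j | y j && (e \in sigma j)]| <= 1) /\
  planar (cg_vertices setT y) (cg_edges E y).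

(* partial candidate y_nu, of length i_nu = size ynu *)
Definition ysel (ynu : seq bool) (j : 'I_k) : bool := (j < size ynu) && nth false ynu j.

Definition crossed (ynu : seq bool) (e : {set V}) : bool :=
  [exists j, ysel ynu j && (e \in sigma j)].

Definition saturated (E : {set {set V}}) (ynu : seq bool) (e : {set V}) : bool :=
  [|| crossed ynu e,
      [forall j, (e \in sigma j) ==> (j < size ynu)]
    | [forall p in indep_pairs E,
         (e \in p) ==> [forall f in p, (f != e) ==> crossed ynu f]]].

Definition Gnu_edges (E : {set {set V}}) (ynu : seq bool) : {set {set V}} :=
  [set e in E | saturated E ynu e].
Definition Gnu_vertices (E : {set {set V}}) (ynu : seq bool) : {set V} :=
  cover (Gnu_edges E ynu).

Definition Gstar_vertices (E : {set {set V}}) (ynu : seq bool) :=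
  cg_vertices (Gnu_vertices E ynu) (ysel ynu).
Definition Gstar_edges (E : {set {set V}}) (ynu : seq bool) :=
  cg_edges (Gnu_edges E ynu) (ysel ynu).

End Cross.

(* Main.v *)
Require Import Defs.
From Stdlib Require Import Reals.
From mathcomp Require Import all_boot.

Lemma planar_sub (W : finType) (VS VS' : {set W}) (ES ES' : {set {set W}}) :
  VS' \subset VS -> ES' \subset ES -> (forall e, e \in ES' -> e \subset VS') ->
  planar VS ES -> planar VS' ES'.
Proof.
move=> sV sE sEV [pos [g [Hinj [Harc [Hv He]]]]]; exists pos, g; split.
  by move=> x y hx hy; apply: Hinj; apply: (subsetP sV).
split.
  move=> e he; have [Hs [u [v [hu hv de h0 h1]]]] := Harc e (subsetP sE e he).
  split=> //; exists u, v; split=> //; apply: (subsetP (sEV e he));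
  by rewrite de !inE eqxx ?orbT.
split.
  by move=> e w t he hw; apply: Hv; [exact: (subsetP sE _ he)|exact: (subsetP sV _ hw)].
by move=> e f s t he hf; apply: He; apply: (subsetP sE).
Qed.

Theorem lemma3 (V : finType) (E : {set {set V}})
  (HE : forall e, e \in E -> #|e| = 2)
  (sigma : 'I_#|indep_pairs E| -> {set {set V}})
  (Hsigma_inj : injective sigma)
  (Hsigma : forall j, sigma j \in indep_pairs E)
  (ynu : seq bool) (Hi : size ynu <= #|indep_pairs E|)
  (ymu : 'I_#|indep_pairs E| -> bool)
  (Hext : forall j : 'I_#|indep_pairs E|, j < size ynu -> ymu j = nth false ynu j)
  (Htrue : true_solution sigma E ymu) :
  planar (Gstar_vertices sigma E ynu) (Gstar_edges sigma E ynu).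
Proof.
case: Htrue => Hone Hpl.
have ysel_ymu : forall j, ysel ynu j -> ymu j.
  by move=> j /andP [hlt hn]; rewrite Hext.
have sigE : forall j f, f \in sigma j -> f \in E.
  move=> j f; have := Hsigma j; rewrite inE => /existsP [a /andP [haE /existsP
    [b /andP [hbE /andP [hdis /eqP ->]]]]].
  by rewrite !inE => /orP [] /eqP ->.
have sigO : forall j e, e \in sigma j -> exists2 f, f \in sigma j & f != e.
  move=> j e; have := Hsigma j; rewrite inE => /existsP [a /andP [haE /existsP
    [b /andP [hbE /andP [hdis /eqP hs]]]]].
  have hab : a != b.
    apply/negP => /eqP hab; move: hdis; rewrite -hab -setI_eq0 setIid => /eqP ha0.
    by move: (HE a haE); rewrite ha0 cards0.
  rewrite hs !inE => /orP [] /eqP ->.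
    by exists b; rewrite ?inE ?eqxx ?orbT // eq_sym.
  by exists a; rewrite ?inE ?eqxx.
apply: (@planar_sub _ _ _ _ _ _ _ _ Hpl).
- apply/subsetP => x; rewrite /Gstar_vertices /cg_vertices in_setU =>
    /orP [/imsetP [v _ ->] | /imsetP [j hj ->]].
    by rewrite in_setU; apply/orP; left; apply/imsetP; exists v; rewrite ?inE.
  rewrite inE in hj; rewrite in_setU; apply/orP; right; apply/imsetP; exists j => //.
  by rewrite inE ysel_ymu.
- apply/subsetP => x; rewrite /Gstar_edges /cg_edges in_setU =>
    /orP [/imsetP [e he ->] | /bigcupP [j hj hx]]; last first.
    by rewrite in_setU; apply/orP; right; apply/bigcupP; exists j => //; apply: ysel_ymu.
  rewrite inE in he; case/andP: he => heG hnc.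
  rewrite inE in heG; case/andP: heG => heE hsat.
  rewrite in_setU; apply/orP; left; apply/imsetP; exists e => //.
  rewrite inE heE /=; apply/existsPn => j; apply/negP => /andP [hy hej].
  case/or3P: hsat.
  + by rewrite /crossed => h; rewrite h in hnc.
  + move=> /forallP /(_ j) /implyP /(_ hej) hlt.
    move/existsPn: hnc => /(_ j); by rewrite /ysel hlt -Hext // hy hej.
  + move=> /forallP /(_ (sigma j)) /implyP /(_ (Hsigma j)) /implyP /(_ hej).
    have [f hf hfe] := sigO j e hej.
    move=> /forallP /(_ f) /implyP /(_ hf) /implyP /(_ hfe) /existsP [j' /andP [hy' hfj']].
    have := Hone f (sigE j f hf) => /card_le1_eqP hc.
    have jj : j = j'.
      by apply: hc; rewrite inE ?hy ?hf ?ysel_ymu ?hfj'.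
    subst j'.
    by move/existsPn: hnc => /(_ j); rewrite hy' hej.
- move=> x; rewrite /Gstar_edges /cg_edges in_setU =>
    /orP [/imsetP [e he ->] | /bigcupP [j hj hx]].
    apply/subsetP => y /imsetP [v hv ->]; rewrite in_setU; apply/orP; left.
    apply/imsetP; exists v => //; rewrite /Gnu_vertices /cover; apply/bigcupP.
    by exists e => //; rewrite inE in he; case/andP: he.
  move/imsetP: hx => [u hu ->]; apply/subsetP => y; move/set2P => [] ->.
    by rewrite /Gstar_vertices /cg_vertices in_setU; apply/orP; right; apply/imsetP; exists j; rewrite ?inE.
  rewrite /Gstar_vertices /cg_vertices in_setU; apply/orP; left; apply/imsetP; exists u => //.
  move/bigcupP: hu => [f hf hu].
  rewrite /Gnu_vertices /cover; apply/bigcupP; exists f => //.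
  rewrite inE (sigE j f hf) /=; rewrite /saturated; apply/orP; left.
  by apply/existsP; exists j; rewrite hj hf.
Qed.
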